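(* Let $0\le c<1$. For the best-worst rule $s=(c,4)$ there is a unique non-convergent Nash equilibrium (up to relabelling of candidates), namely $x=((x^1,2),(1-x^1,2))$ with $x^1=\frac{1}{4}(1+c)$. For the rule $s=(c,5)$ there is a unique non-convergent Nash equilibrium (up to relabelling of candidates), namely $x=((x^1,2),(1/2,1),(1-x^1,2))$ with $x^1=\frac16(1+2c)$.
   Context: Setting: voters' ideal points are distributed uniformly (unit mass, Lebesgue measure) on $[0,1]$. There are $m$ candidates; a profile is $x=(x_1,\dots,x_m)\in[0,1]^m$. A voter with ideal point $y$ ranks candidates by distance $|x_i-y|$ (closer is better); ties are broken by a fair lottery (uniformly random strict order among tied candidates). Under the best-worst rule $s=(c,m)$ ($c\ge0$), a candidate receives $1$ point from each voter ranking her first, $-c$ from each voter ranking her last ($m$-th), and $0$ otherwise; $v_i(x)$ is candidate $i$'s expected total points. A (pure-strategy Nash) equilibrium is a profile $x^*$ with $v_i(x^* )\ge v_i(t,x^*_{-i})$ for all $i$ and $t\in[0,1]$ ($(t,x_{-i})$ is $x$ with $x_i$ replaced by $t$); it is non-convergent (NCNE) if at least two platforms are distinct. Notation $x=((x^1,n_1),\dots,(x^q,n_q))$ lists the distinct occupied positions $x^1<\dots<x^q$ with $n_j$ candidates at $x^j$. *)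

(* Defs.v *)
From Stdlib Require Import Reals Lra List ClassicalEpsilon.
Import ListNotations.
Open Scope R_scope.

(* A profile of m candidates is x : nat -> R, candidate indices 0..m-1. *)

Definition ncount (m : nat) (p : nat -> bool) : nat :=
  length (filter p (seq 0 m)).

Definition Rltb (a b : R) : bool := if Rlt_dec a b then true else false.
Definition Reqb (a b : R) : bool := if Req_dec_T a b then true else false.

(* Expected points that candidate i receives from the voter with ideal point y
   under the best-worst rule (c, m), with fair-lottery tie-breaking:
   if a candidates are strictly closer to y than i and k candidates (i included)
   are exactly as close as i, then i's rank is uniform on {a+1, ..., a+k}.
   So P(first) = 1/k if a = 0 (else 0) and P(last) = 1/k if a + k = m (else 0). *)
Definition score_at (c : R) (m : nat) (x : nat -> R) (i : nat) (y : R) : R :=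
  let d := Rabs (x i - y) in
  let a := ncount m (fun j => Rltb (Rabs (x j - y)) d) in
  let k := ncount m (fun j => Reqb (Rabs (x j - y)) d) in
  (if Nat.eqb a 0 then / INR k else 0)
  - c * (if Nat.eqb (a + k) m then / INR k else 0).

(* Integral over the voters (uniform unit mass on [0,1]) as a Riemann integral;
   the integrand is a step function, hence Riemann integrable. *)
Definition integral01 (f : R -> R) : R :=
  epsilon (inhabits 0) (fun v => exists pr : Riemann_integrable f 0 1, RiemannInt pr = v).

Definition vscore (c : R) (m : nat) (x : nat -> R) (i : nat) : R :=
  integral01 (score_at c m x i).

Definition upd (x : nat -> R) (i : nat) (t : R) : nat -> R :=
  fun j => if Nat.eqb j i then t else x j.

Definition is_profile (m : nat) (x : nat -> R) : Prop :=
  forall j, (j < m)%nat -> 0 <= x j <= 1.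

Definition is_NE (c : R) (m : nat) (x : nat -> R) : Prop :=
  is_profile m x /\
  forall i t, (i < m)%nat -> 0 <= t <= 1 -> vscore c m (upd x i t) i <= vscore c m x i.

Definition is_NCNE (c : R) (m : nat) (x : nat -> R) : Prop :=
  is_NE c m x /\ exists i j, (i < m)%nat /\ (j < m)%nat /\ x i <> x j.

Definition nat_pos (m : nat) (x : nat -> R) (p : R) : nat :=
  ncount m (fun j => Reqb (x j) p).

(* Main.v *)
Require Import Defs.
From Stdlib Require Import Reals Lra Lia List ClassicalEpsilon.
From Coquelicot Require Import Coquelicot.
Import ListNotations.
Open Scope R_scope.

Lemma integral01_is_RInt f v : is_RInt f 0 1 v -> integral01 f = v.
Proof.
  intros H. unfold integral01.
  assert (pr : Riemann_integrable f 0 1) by (apply ex_RInt_Reals_0; exists v; exact H).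
  assert (E : exists v', exists pr : Riemann_integrable f 0 1, RiemannInt pr = v').
  { exists (RiemannInt pr), pr; reflexivity. }
  destruct (epsilon_spec (inhabits 0) _ E) as [pr' Hpr'].
  rewrite <- Hpr', <- RInt_Reals. apply is_RInt_unique. exact H.
Qed.

Lemma is_RInt_cst_R (a b v : R) (f : R -> R) :
  (forall y, Rmin a b < y < Rmax a b -> f y = v) -> is_RInt f a b (v * (b - a)).
Proof.
  intros H. apply is_RInt_ext with (fun _ => v).
  - intros y Hy. symmetry. now apply H.
  - replace (v * (b - a)) with (scal (b - a) v). apply (@is_RInt_const R_NormedModule).
    unfold scal; simpl; unfold mult; simpl. ring.
Qed.

Lemma is_RInt_step3 (f : R -> R) p q a b e :
  0 <= p <= q -> q <= 1 ->
  (forall y, 0 < y < p -> f y = a) ->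
  (forall y, p < y < q -> f y = b) ->
  (forall y, q < y < 1 -> f y = e) ->
  is_RInt f 0 1 (a * p + b * (q - p) + e * (1 - q)).
Proof.
  intros H1 H2 Ha Hb He.
  replace (a * p + b * (q - p) + e * (1 - q)) with
    (plus (plus (a * (p - 0)) (b * (q - p))) (e * (1 - q)))
    by (unfold plus; simpl; ring).
  apply (@is_RInt_Chasles R_NormedModule) with q; [apply (@is_RInt_Chasles R_NormedModule) with p|];
    apply is_RInt_cst_R; intros y Hy;
    [apply Ha|apply Hb|apply He];
    revert Hy; unfold Rmin, Rmax; repeat destruct Rle_dec; lra.
Qed.

Lemma is_RInt_lin f g a b F G c :
  is_RInt f a b F -> is_RInt g a b G ->
  is_RInt (fun y => f y - c * g y) a b (F - c * G).
Proof.
  intros Hf Hg.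
  pose proof (is_RInt_minus _ _ _ _ _ _ Hf (is_RInt_scal _ _ _ c _ Hg)) as H.
  exact H.
Qed.

Require Import Defs.
From Stdlib Require Import Reals Lra Lia List.
Import ListNotations.
Open Scope R_scope.

Lemma ncount_S m p : ncount (S m) p = (ncount m p + (if p m then 1 else 0))%nat.
Proof.
  unfold ncount. rewrite seq_S, filter_app, length_app. simpl.
  destruct (p m); reflexivity.
Qed.

Lemma ncount_ext m p q : (forall j, (j < m)%nat -> p j = q j) -> ncount m p = ncount m q.
Proof.
  induction m; intros H; [reflexivity|]. rewrite !ncount_S, IHm by (intros; apply H; lia).
  rewrite H by lia. reflexivity.
Qed.

Lemma ncount_le m p : (ncount m p <= m)%nat.
Proof. induction m; [unfold ncount; simpl; lia|]. rewrite ncount_S. destruct (p m); lia. Qed.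

Lemma ncount_zero m p : (forall j, (j < m)%nat -> p j = false) -> ncount m p = 0%nat.
Proof.
  induction m; intros H; [reflexivity|]. rewrite ncount_S, IHm by (intros; apply H; lia).
  rewrite H by lia. reflexivity.
Qed.

Lemma ncount_all m p : (forall j, (j < m)%nat -> p j = true) -> ncount m p = m.
Proof.
  induction m; intros H; [reflexivity|]. rewrite ncount_S, IHm by (intros; apply H; lia).
  rewrite H by lia. lia.
Qed.

Lemma ncount_pos m p j : (j < m)%nat -> p j = true -> (0 < ncount m p)%nat.
Proof.
  induction m; intros Hj Hp; [lia|]. rewrite ncount_S.
  destruct (Nat.eq_dec j m); [subst; rewrite Hp; lia|].
  specialize (IHm ltac:(lia) Hp). lia.
Qed.

Lemma ncount_lt m p j : (j < m)%nat -> p j = false -> (ncount m p < m)%nat.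
Proof.
  induction m; intros Hj Hp; [lia|]. rewrite ncount_S.
  destruct (Nat.eq_dec j m); [subst; rewrite Hp; pose proof (ncount_le m p); lia|].
  specialize (IHm ltac:(lia) Hp). destruct (p m); lia.
Qed.

Lemma ncount_disj m p q : (forall j, (j < m)%nat -> p j = true -> q j = false) ->
  (ncount m p + ncount m q)%nat = ncount m (fun j => orb (p j) (q j)).
Proof.
  induction m; intros H; [reflexivity|]. rewrite !ncount_S, <- IHm by (intros; apply H; auto; lia).
  specialize (H m ltac:(lia)). destruct (p m), (q m); simpl; try lia.
Qed.

Lemma ncount_compl m p : (ncount m p + ncount m (fun j => negb (p j)))%nat = m.
Proof.
  rewrite ncount_disj. apply ncount_all. intros; destruct (p j); reflexivity.
  intros j _ H; rewrite H; reflexivity.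
Qed.

Lemma ncount_full m p : ncount m p = m -> forall j, (j < m)%nat -> p j = true.
Proof.
  intros H j Hj. destruct (p j) eqn:E; auto. pose proof (ncount_lt m p j Hj E). lia.
Qed.

Lemma ncount_one m p i : (i < m)%nat -> p i = true -> (forall j, (j < m)%nat -> j <> i -> p j = false) ->
  ncount m p = 1%nat.
Proof.
  intros Hi Hp H. rewrite (ncount_ext m p (fun j => Nat.eqb j i)).
  2:{ intros j Hj. destruct (Nat.eqb_spec j i); subst; auto. }
  clear p Hp H. induction m; [lia|]. rewrite ncount_S.
  destruct (Nat.eq_dec i m).
  - subst. rewrite ncount_zero. rewrite Nat.eqb_refl. lia.
    intros j Hj. apply Nat.eqb_neq. lia.
  - rewrite IHm by lia. replace (m =? i)%nat with false; [lia|]. symmetry; apply Nat.eqb_neq; lia.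
Qed.

Lemma ncount_add1 m p q i : (i < m)%nat -> p i = false -> q i = true ->
  (forall j, (j < m)%nat -> j <> i -> q j = p j) -> ncount m q = S (ncount m p).
Proof.
  induction m; intros Hi Hp Hq H; [lia|]. rewrite !ncount_S.
  destruct (Nat.eq_dec i m).
  - subst. rewrite Hp, Hq. rewrite (ncount_ext m q p). lia. intros; apply H; lia.
  - rewrite IHm by (auto; try lia; intros; apply H; lia). rewrite H by lia. lia.
Qed.

Lemma ncount_two m p i : (2 <= ncount m p)%nat -> (i < m)%nat -> p i = true ->
  exists j, (j < m)%nat /\ j <> i /\ p j = true.
Proof.
  intros H Hi Hp. destruct (Classical_Prop.classic (exists j, (j < m)%nat /\ j <> i /\ p j = true)) as [E|E]; auto.
  exfalso. rewrite (ncount_one m p i) in H; auto; [lia|].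
  intros j Hj Hji. destruct (p j) eqn:Ep; auto. exfalso; apply E; eauto.
Qed.

Require Import Defs.
From Stdlib Require Import Reals Lra Lia List.
Import ListNotations.
Open Scope R_scope.

Definition aa m (x : nat -> R) i y := ncount m (fun j => Rltb (Rabs (x j - y)) (Rabs (x i - y))).
Definition kk m (x : nat -> R) i y := ncount m (fun j => Reqb (Rabs (x j - y)) (Rabs (x i - y))).
Definition first_at m x i y := if Nat.eqb (aa m x i y) 0 then / INR (kk m x i y) else 0.
Definition last_at m x i y := if Nat.eqb (aa m x i y + kk m x i y) m then / INR (kk m x i y) else 0.

Lemma score_split c m x i y : score_at c m x i y = first_at m x i y - c * last_at m x i y.
Proof. reflexivity. Qed.

Ltac rabs := unfold Rabs in *; repeat destruct Rcase_abs; try lra.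

Lemma Rltb_t a b : a < b -> Rltb a b = true.
Proof. unfold Rltb; destruct Rlt_dec; auto; lra. Qed.
Lemma Rltb_f a b : ~ a < b -> Rltb a b = false.
Proof. unfold Rltb; destruct Rlt_dec; auto; lra. Qed.
Lemma Reqb_t a b : a = b -> Reqb a b = true.
Proof. unfold Reqb; destruct Req_dec_T; auto; lra. Qed.
Lemma Reqb_f a b : a <> b -> Reqb a b = false.
Proof. unfold Reqb; destruct Req_dec_T; auto; lra. Qed.

Lemma first_in m x i y :
  (forall j, (j < m)%nat -> x j <> x i -> Rabs (x i - y) < Rabs (x j - y)) ->
  first_at m x i y = / INR (nat_pos m x (x i)).
Proof.
  intros H. unfold first_at.
  replace (aa m x i y) with 0%nat.
  2:{ symmetry; apply ncount_zero. intros j Hj. apply Rltb_f.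
      destruct (Req_dec (x j) (x i)) as [E|E]; [rewrite E; lra|]. specialize (H j Hj E); lra. }
  simpl. f_equal. f_equal. apply ncount_ext. intros j Hj.
  destruct (Req_dec (x j) (x i)) as [E|E].
  - rewrite E, !Reqb_t; auto.
  - specialize (H j Hj E). rewrite !Reqb_f; auto; lra.
Qed.

Lemma first_out m x i y j : (j < m)%nat -> Rabs (x j - y) < Rabs (x i - y) -> first_at m x i y = 0.
Proof.
  intros Hj H. unfold first_at.
  pose proof (ncount_pos m (fun j => Rltb (Rabs (x j - y)) (Rabs (x i - y))) j Hj (Rltb_t _ _ H)).
  unfold aa. destruct (Nat.eqb_spec (ncount m (fun j => Rltb (Rabs (x j - y)) (Rabs (x i - y)))) 0); [lia|auto].
Qed.

Lemma ak_le m x i y : (aa m x i y + kk m x i y)%nat =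
  ncount m (fun j => orb (Rltb (Rabs (x j - y)) (Rabs (x i - y))) (Reqb (Rabs (x j - y)) (Rabs (x i - y)))).
Proof.
  apply ncount_disj. intros j _ H. unfold Rltb in H. destruct Rlt_dec; try discriminate.
  apply Reqb_f; lra.
Qed.

Lemma last_in m x i y :
  (forall j, (j < m)%nat -> Rabs (x j - y) <= Rabs (x i - y)) ->
  (forall j, (j < m)%nat -> x j <> x i -> Rabs (x j - y) < Rabs (x i - y)) ->
  last_at m x i y = / INR (nat_pos m x (x i)).
Proof.
  intros H1 H2. unfold last_at.
  rewrite ak_le, ncount_all.
  2:{ intros j Hj. specialize (H1 j Hj). unfold Rltb, Reqb. destruct Rlt_dec; auto. destruct Req_dec_T; auto. lra. }
  rewrite Nat.eqb_refl. f_equal. f_equal. apply ncount_ext. intros j Hj.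
  destruct (Req_dec (x j) (x i)) as [E|E].
  - rewrite E, !Reqb_t; auto.
  - specialize (H2 j Hj E). rewrite !Reqb_f; auto; lra.
Qed.

Lemma last_out m x i y j : (j < m)%nat -> Rabs (x i - y) < Rabs (x j - y) -> last_at m x i y = 0.
Proof.
  intros Hj H. unfold last_at. rewrite ak_le.
  pose proof (ncount_lt m (fun j => orb (Rltb (Rabs (x j - y)) (Rabs (x i - y))) (Reqb (Rabs (x j - y)) (Rabs (x i - y)))) j Hj).
  destruct (Nat.eqb_spec (ncount m (fun j => orb (Rltb (Rabs (x j - y)) (Rabs (x i - y))) (Reqb (Rabs (x j - y)) (Rabs (x i - y))))) m); auto.
  exfalso. assert (orb (Rltb (Rabs (x j - y)) (Rabs (x i - y))) (Reqb (Rabs (x j - y)) (Rabs (x i - y))) = false).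
  { rewrite Rltb_f, Reqb_f; auto; lra. }
  specialize (H0 H1). lia.
Qed.

Lemma first_int m x i lo hi : (i < m)%nat -> 0 <= lo <= x i -> x i <= hi <= 1 ->
  (forall j, (j < m)%nat -> x j < x i -> (x j + x i) / 2 <= lo) ->
  (lo = 0 \/ exists j, (j < m)%nat /\ x j < x i /\ lo = (x j + x i) / 2) ->
  (forall j, (j < m)%nat -> x i < x j -> hi <= (x j + x i) / 2) ->
  (hi = 1 \/ exists j, (j < m)%nat /\ x i < x j /\ hi = (x j + x i) / 2) ->
  is_RInt (first_at m x i) 0 1 ((hi - lo) / INR (nat_pos m x (x i))).
Proof.
  intros Hi H1 H2 Hlo Hlo' Hhi Hhi'.
  replace ((hi - lo) / INR (nat_pos m x (x i))) with
    (0 * lo + / INR (nat_pos m x (x i)) * (hi - lo) + 0 * (1 - hi)) by (unfold Rdiv; ring).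
  apply is_RInt_step3; try lra.
  - intros y Hy. destruct Hlo' as [E|[j [Hj [Hjl E]]]]; [lra|].
    apply first_out with j; auto. rabs.
  - intros y Hy. apply first_in. intros j Hj Hne.
    destruct (Rlt_dec (x j) (x i)) as [Hl|Hl].
    + specialize (Hlo j Hj Hl). rabs.
    + assert (x i < x j) by lra. specialize (Hhi j Hj H). rabs.
  - intros y Hy. destruct Hhi' as [E|[j [Hj [Hjl E]]]]; [lra|].
    apply first_out with j; auto. rabs.
Qed.

Lemma last_min m x i r : (r < m)%nat -> 0 <= x i -> x r <= 1 -> x i < x r ->
  (forall j, (j < m)%nat -> x i <= x j <= x r) ->
  is_RInt (last_at m x i) 0 1 ((1 - (x i + x r) / 2) / INR (nat_pos m x (x i))).
Proof.
  intros Hr H0 H1 Hlt H.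
  replace ((1 - (x i + x r) / 2) / INR (nat_pos m x (x i))) with
    (0 * ((x i + x r) / 2) + 0 * ((x i + x r) / 2 - (x i + x r) / 2) + / INR (nat_pos m x (x i)) * (1 - (x i + x r) / 2)) by (unfold Rdiv; ring).
  apply is_RInt_step3; try lra.
  - intros y Hy. apply last_out with r; auto. rabs.
  - intros y Hy. lra.
  - intros y Hy. apply last_in.
    + intros j Hj. specialize (H j Hj). rabs.
    + intros j Hj Hne. specialize (H j Hj). rabs.
Qed.

Lemma last_max m x i l : (l < m)%nat -> 0 <= x l -> x i <= 1 -> x l < x i ->
  (forall j, (j < m)%nat -> x l <= x j <= x i) ->
  is_RInt (last_at m x i) 0 1 (((x l + x i) / 2) / INR (nat_pos m x (x i))).
Proof.
  intros Hr H0 H1 Hlt H.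
  replace (((x l + x i) / 2) / INR (nat_pos m x (x i))) with
    (/ INR (nat_pos m x (x i)) * ((x l + x i) / 2) + 0 * ((x l + x i) / 2 - (x l + x i) / 2) + 0 * (1 - (x l + x i) / 2)) by (unfold Rdiv; ring).
  apply is_RInt_step3; try lra.
  - intros y Hy. apply last_in.
    + intros j Hj. specialize (H j Hj). rabs.
    + intros j Hj Hne. specialize (H j Hj). rabs.
  - intros y Hy. lra.
  - intros y Hy. apply last_out with l; auto. rabs.
Qed.

Lemma last_mid m x i l r : (l < m)%nat -> (r < m)%nat -> x l < x i -> x i < x r ->
  is_RInt (last_at m x i) 0 1 0.
Proof.
  intros Hl Hr H1 H2. replace 0 with (0 * 0 + 0 * (0 - 0) + 0 * (1 - 0)) at 2 by ring.
  apply is_RInt_step3; try lra; intros y Hy;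
  destruct (Rle_dec y (x i)); [apply last_out with r|apply last_out with l|apply last_out with r|apply last_out with l|apply last_out with r|apply last_out with l]; auto; rabs.
Qed.

Lemma vscore_eq c m x i F G : is_RInt (first_at m x i) 0 1 F -> is_RInt (last_at m x i) 0 1 G ->
  vscore c m x i = F - c * G.
Proof.
  intros HF HG. apply integral01_is_RInt. exact (is_RInt_lin _ _ _ _ _ _ c HF HG).
Qed.

Lemma ex_min_P m (x : nat -> R) (P : nat -> Prop) : (exists j, (j < m)%nat /\ P j) ->
  exists k, (k < m)%nat /\ P k /\ forall j, (j < m)%nat -> P j -> x k <= x j.
Proof.
  induction m; intros [j [Hj Pj]]; [lia|].
  destruct (Classical_Prop.classic (exists j, (j < m)%nat /\ P j)) as [E|E].
  - destruct (IHm E) as [k [Hk [Pk H]]].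
    destruct (Classical_Prop.classic (P m /\ x m < x k)) as [[Pm Hm]|F].
    + exists m. repeat split; auto. intros j' Hj' Pj'. destruct (Nat.eq_dec j' m); [subst; lra|].
      specialize (H j' ltac:(lia) Pj'). lra.
    + exists k. repeat split; auto. intros j' Hj' Pj'. destruct (Nat.eq_dec j' m); [subst|apply H; auto; lia].
      destruct (Rle_dec (x k) (x m)); auto. exfalso; apply F; split; auto; lra.
  - assert (j = m) by (destruct (Nat.eq_dec j m); auto; exfalso; apply E; exists j; split; auto; lia). subst.
    exists m. repeat split; auto. intros j' Hj' Pj'. destruct (Nat.eq_dec j' m); [subst; lra|].
    exfalso; apply E; exists j'; split; auto; lia.
Qed.

Lemma ex_max_P m (x : nat -> R) (P : nat -> Prop) : (exists j, (j < m)%nat /\ P j) ->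
  exists k, (k < m)%nat /\ P k /\ forall j, (j < m)%nat -> P j -> x j <= x k.
Proof.
  intros H. destruct (ex_min_P m (fun j => - x j) P H) as [k [Hk [Pk H']]].
  exists k; repeat split; auto. intros j Hj Pj. specialize (H' j Hj Pj). lra.
Qed.

Lemma last_all m x i : (forall j, (j < m)%nat -> x j = x i) ->
  is_RInt (last_at m x i) 0 1 (/ INR (nat_pos m x (x i))).
Proof.
  intros H. replace (/ INR (nat_pos m x (x i))) with
   (0 * 0 + 0 * (0 - 0) + / INR (nat_pos m x (x i)) * (1 - 0)) by ring.
  apply is_RInt_step3; try lra; intros y Hy; try lra. apply last_in.
  - intros j Hj; rewrite H; auto; lra.
  - intros j Hj Hne; exfalso; apply Hne; auto.
Qed.

Lemma first_ex m x i : is_profile m x -> (i < m)%nat -> exists F, is_RInt (first_at m x i) 0 1 F.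
Proof.
  intros Hp Hi. pose proof (Hp i Hi) as Hxi.
  assert (exists lo, 0 <= lo <= x i /\
    (forall j, (j < m)%nat -> x j < x i -> (x j + x i) / 2 <= lo) /\
    (lo = 0 \/ exists j, (j < m)%nat /\ x j < x i /\ lo = (x j + x i) / 2)) as [lo [H1 [H2 H3]]].
  { destruct (Classical_Prop.classic (exists j, (j < m)%nat /\ x j < x i)) as [E|E].
    - destruct (ex_max_P m x _ E) as [k [Hk [Pk H]]]. exists ((x k + x i) / 2).
      pose proof (Hp k Hk). repeat split; try lra.
      + intros j Hj Hlt. specialize (H j Hj Hlt). lra.
      + right; eauto.
    - exists 0. repeat split; try lra; auto. intros j Hj Hlt. exfalso; eauto. }
  assert (exists hi, x i <= hi <= 1 /\
    (forall j, (j < m)%nat -> x i < x j -> hi <= (x j + x i) / 2) /\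
    (hi = 1 \/ exists j, (j < m)%nat /\ x i < x j /\ hi = (x j + x i) / 2)) as [hi [H4 [H5 H6]]].
  { destruct (Classical_Prop.classic (exists j, (j < m)%nat /\ x i < x j)) as [E|E].
    - destruct (ex_min_P m x _ E) as [k [Hk [Pk H]]]. exists ((x k + x i) / 2).
      pose proof (Hp k Hk). repeat split; try lra.
      + intros j Hj Hlt. specialize (H j Hj Hlt). lra.
      + right; eauto.
    - exists 1. repeat split; try lra; auto. intros j Hj Hlt. exfalso; eauto. }
  eexists. apply first_int with (lo := lo) (hi := hi); auto; lra.
Qed.

Lemma last_ex m x i : is_profile m x -> (i < m)%nat -> exists G, is_RInt (last_at m x i) 0 1 G.
Proof.
  intros Hp Hi. pose proof (Hp i Hi) as Hxi.
  destruct (Classical_Prop.classic (exists j, (j < m)%nat /\ x j < x i)) as [El|El];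
  destruct (Classical_Prop.classic (exists j, (j < m)%nat /\ x i < x j)) as [Er|Er].
  - destruct El as [l [Hl Hl']], Er as [r [Hr Hr']]. eexists; apply (last_mid m x i l r); auto.
  - destruct (ex_min_P m x (fun _ => True)) as [l0 [Hl [_ H]]]; [exists i; auto|].
    assert (x l0 < x i). { destruct El as [j [Hj Hj']]. specialize (H j Hj I). lra. }
    pose proof (Hp l0 Hl).
    eexists; eapply last_max; eauto; try lra. intros j Hj. split; [apply H; auto|].
    destruct (Rle_dec (x j) (x i)); auto. exfalso; apply Er; exists j; split; auto; lra.
  - destruct (ex_max_P m x (fun _ => True)) as [r [Hr [_ H]]]; [exists i; auto|].
    assert (x i < x r). { destruct Er as [j [Hj Hj']]. specialize (H j Hj I). lra. }
    pose proof (Hp r Hr).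
    eexists; eapply last_min; eauto; try lra. intros j Hj. split; [|apply H; auto].
    destruct (Rle_dec (x i) (x j)); auto. exfalso; apply El; exists j; split; auto; lra.
  - eexists; apply last_all. intros j Hj.
    destruct (Rtotal_order (x j) (x i)) as [h|[h|h]]; auto; exfalso; [apply El|apply Er]; eauto.
Qed.

Definition refl (x : nat -> R) : nat -> R := fun j => 1 - x j.

Lemma refl_abs a y : Rabs (1 - a - y) = Rabs (a - (1 - y)).
Proof. replace (1 - a - y) with (- (a - (1 - y))) by ring. apply Rabs_Ropp. Qed.

Lemma score_refl c m x i y : score_at c m (refl x) i y = score_at c m x i (1 - y).
Proof.
  rewrite !score_split.
  assert (Ea : aa m (refl x) i y = aa m x i (1 - y)).
  { apply ncount_ext; intros j _; unfold refl; rewrite !refl_abs; reflexivity. }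
  assert (Ek : kk m (refl x) i y = kk m x i (1 - y)).
  { apply ncount_ext; intros j _; unfold refl; rewrite !refl_abs; reflexivity. }
  unfold first_at, last_at. rewrite Ea, Ek. reflexivity.
Qed.

Lemma is_RInt_refl (f : R -> R) (v : R) : is_RInt f 0 1 v -> is_RInt (fun y => f (1 - y)) 0 1 v.
Proof.
  intros H.
  assert (H1 : @is_RInt R_NormedModule f (-1 * 0 + 1) (-1 * 1 + 1) (- v)).
  { replace (-1 * 0 + 1) with 1 by ring. replace (-1 * 1 + 1) with 0 by ring.
    apply (@is_RInt_swap R_NormedModule) in H. exact H. }
  pose proof (is_RInt_comp_lin f (-1) 1 0 1 (- v) H1) as H2.
  apply (@is_RInt_scal R_NormedModule _ _ _ (-1)) in H2.
  assert (E : @scal R_Ring (NormedModule.ModuleSpace R_AbsRing R_NormedModule) (-1) (-v) = v)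
    by (change (-1 * - v = v); ring).
  rewrite E in H2.
  apply (@is_RInt_ext R_NormedModule (fun y => scal (-1) (scal (-1) (f (-1*y+1))))); [|exact H2].
  intros y _. change ((-1) * ((-1) * f (-1*y+1)) = f (1 - y)).
  replace (-1*y+1) with (1-y) by ring. ring.
Qed.

Lemma vscore_refl c m x i : is_profile m x -> (i < m)%nat -> vscore c m (refl x) i = vscore c m x i.
Proof.
  intros Hp Hi. destruct (first_ex m x i Hp Hi) as [F HF], (last_ex m x i Hp Hi) as [G HG].
  assert (H : is_RInt (score_at c m x i) 0 1 (F - c * G)) by exact (is_RInt_lin _ _ _ _ _ _ c HF HG).
  unfold vscore. rewrite (integral01_is_RInt _ _ H).
  apply integral01_is_RInt. apply is_RInt_refl in H.
  eapply (@is_RInt_ext R_NormedModule); [|exact H].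
  intros y _. simpl. rewrite score_refl. reflexivity.
Qed.

From Stdlib Require Import FunctionalExtensionality.

Definition cand_ok c m x i := forall t, 0 <= t <= 1 -> vscore c m (upd x i t) i <= vscore c m x i.

Lemma upd_eq x i t : upd x i t i = t.
Proof. unfold upd; rewrite Nat.eqb_refl; auto. Qed.
Lemma upd_neq x i t j : j <> i -> upd x i t j = x j.
Proof. intros H; unfold upd; apply Nat.eqb_neq in H; rewrite H; auto. Qed.

Lemma upd_refl x i t : upd (refl x) i t = refl (upd x i (1 - t)).
Proof. apply functional_extensionality; intros j; unfold upd, refl; destruct (j =? i)%nat; ring. Qed.
Lemma refl_refl x : refl (refl x) = x.
Proof. apply functional_extensionality; intros j; unfold refl; ring. Qed.
Lemma upd_same x i : upd x i (x i) = x.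
Proof. apply functional_extensionality; intros j; unfold upd; destruct (Nat.eqb_spec j i); subst; auto. Qed.

Lemma profile_refl m x : is_profile m x -> is_profile m (refl x).
Proof. intros H j Hj; specialize (H j Hj); unfold refl; lra. Qed.
Lemma profile_upd m x i t : is_profile m x -> 0 <= t <= 1 -> is_profile m (upd x i t).
Proof. intros H Ht j Hj; unfold upd; destruct (j =? i)%nat; auto. Qed.

Lemma cand_ok_refl c m x i : is_profile m x -> (i < m)%nat -> cand_ok c m x i -> cand_ok c m (refl x) i.
Proof.
  intros Hp Hi H t Ht. rewrite upd_refl, !vscore_refl; auto.
  apply H; lra. apply profile_upd; auto; lra.
Qed.

Lemma nat_pos_refl m x p : nat_pos m (refl x) p = nat_pos m x (1 - p).
Proof.
  apply ncount_ext; intros j _; unfold refl.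
  destruct (Req_dec (x j) (1 - p)); [rewrite !Reqb_t|rewrite !Reqb_f]; auto; lra.
Qed.

Lemma NE_cand c m x : is_NE c m x -> forall i, (i < m)%nat -> cand_ok c m x i.
Proof. intros [_ H] i Hi t Ht; apply H; auto. Qed.

Lemma V_min c m x i r hi : (i < m)%nat -> (r < m)%nat -> is_profile m x -> x i < x r ->
  (forall j, (j < m)%nat -> x i <= x j <= x r) -> x i <= hi <= 1 ->
  (forall j, (j < m)%nat -> x i < x j -> hi <= (x j + x i) / 2) ->
  (hi = 1 \/ exists j, (j < m)%nat /\ x i < x j /\ hi = (x j + x i) / 2) ->
  vscore c m x i = (hi - 0) / INR (nat_pos m x (x i)) - c * ((1 - (x i + x r) / 2) / INR (nat_pos m x (x i))).
Proof.
  intros Hi Hr Hp Hlt H Hh Hhi Hhi'. pose proof (Hp i Hi); pose proof (Hp r Hr).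
  apply vscore_eq; [apply first_int|apply last_min]; auto; try lra.
  all: try (intros j Hj Hl; specialize (H j Hj); lra); try (apply H; auto).
Qed.

Lemma V_max c m x i l lo : (i < m)%nat -> (l < m)%nat -> is_profile m x -> x l < x i ->
  (forall j, (j < m)%nat -> x l <= x j <= x i) -> 0 <= lo <= x i ->
  (forall j, (j < m)%nat -> x j < x i -> (x j + x i) / 2 <= lo) ->
  (lo = 0 \/ exists j, (j < m)%nat /\ x j < x i /\ lo = (x j + x i) / 2) ->
  vscore c m x i = (1 - lo) / INR (nat_pos m x (x i)) - c * (((x l + x i) / 2) / INR (nat_pos m x (x i))).
Proof.
  intros Hi Hr Hp Hlt H Hh Hlo Hlo'. pose proof (Hp i Hi); pose proof (Hp l Hr).
  apply vscore_eq; [apply first_int|apply last_max]; auto; try lra.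
  all: try (intros j Hj Hl; specialize (H j Hj); lra); try (apply H; auto).
Qed.

Lemma V_mid c m x i l r lo hi : (i < m)%nat -> (l < m)%nat -> (r < m)%nat -> x l < x i -> x i < x r ->
  0 <= lo <= x i -> x i <= hi <= 1 ->
  (forall j, (j < m)%nat -> x j < x i -> (x j + x i) / 2 <= lo) ->
  (lo = 0 \/ exists j, (j < m)%nat /\ x j < x i /\ lo = (x j + x i) / 2) ->
  (forall j, (j < m)%nat -> x i < x j -> hi <= (x j + x i) / 2) ->
  (hi = 1 \/ exists j, (j < m)%nat /\ x i < x j /\ hi = (x j + x i) / 2) ->
  vscore c m x i = (hi - lo) / INR (nat_pos m x (x i)) - c * 0.
Proof.
  intros. apply vscore_eq; [apply first_int|apply (last_mid m x i l r)]; auto.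
Qed.

Lemma np_new m x i t : (i < m)%nat -> (forall j, (j < m)%nat -> j <> i -> x j <> t) ->
  nat_pos m (upd x i t) (upd x i t i) = 1%nat.
Proof.
  intros Hi H. rewrite upd_eq. apply ncount_one with i; auto.
  rewrite upd_eq; apply Reqb_t; auto. intros j Hj Hne; rewrite upd_neq; auto. apply Reqb_f; auto.
Qed.

Lemma np_join m x i t : (i < m)%nat -> x i <> t ->
  nat_pos m (upd x i t) (upd x i t i) = S (nat_pos m x t).
Proof.
  intros Hi H. rewrite upd_eq. apply ncount_add1 with i; auto.
  apply Reqb_f; auto. rewrite upd_eq; apply Reqb_t; auto.
  intros j Hj Hne; rewrite upd_neq; auto.
Qed.

Lemma affine_lim (al be v a b : R) : a < b -> (forall t, a < t < b -> al * t + be <= v) ->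
  al * a + be <= v /\ al * b + be <= v.
Proof.
  intros Hab H. split; apply Rnot_lt_le; intros Hc.
  - set (e := Rmin ((b - a) / 2) ((al * a + be - v) / (2 * (Rabs al + 1)))).
    assert (He : 0 < e). { unfold e, Rmin; destruct Rle_dec; [lra|]. apply Rdiv_lt_0_compat; [lra|]. pose proof (Rabs_pos al); lra. }
    assert (He2 : e <= (al * a + be - v) / (2 * (Rabs al + 1))) by apply Rmin_r.
    assert (He1 : e <= (b - a) / 2) by apply Rmin_l.
    specialize (H (a + e) ltac:(lra)).
    assert (Hq : e * (2 * (Rabs al + 1)) <= al * a + be - v).
    { pose proof (Rabs_pos al). apply Rmult_le_compat_r with (r := 2 * (Rabs al + 1)) in He2; [|lra].
      unfold Rdiv in He2. rewrite Rmult_assoc, Rinv_l in He2; lra. }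
    assert (al * e >= - (Rabs al * e)). { rabs; nra. }
    nra.
  - set (e := Rmin ((b - a) / 2) ((al * b + be - v) / (2 * (Rabs al + 1)))).
    assert (He : 0 < e). { unfold e, Rmin; destruct Rle_dec; [lra|]. apply Rdiv_lt_0_compat; [lra|]. pose proof (Rabs_pos al); lra. }
    assert (He2 : e <= (al * b + be - v) / (2 * (Rabs al + 1))) by apply Rmin_r.
    assert (He1 : e <= (b - a) / 2) by apply Rmin_l.
    specialize (H (b - e) ltac:(lra)).
    assert (Hq : e * (2 * (Rabs al + 1)) <= al * b + be - v).
    { pose proof (Rabs_pos al). apply Rmult_le_compat_r with (r := 2 * (Rabs al + 1)) in He2; [|lra].
      unfold Rdiv in He2. rewrite Rmult_assoc, Rinv_l in He2; lra. }
    assert (al * e <= (Rabs al * e)). { rabs; nra. }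
    nra.
Qed.

Ltac updsimp := repeat (rewrite upd_eq || (rewrite upd_neq by congruence)).
Ltac gen i0 Hall := let j := fresh "j" in let Hj := fresh "Hj" in let Hne := fresh "Hne" in let E := fresh "E" in
  intros j Hj; destruct (Nat.eq_dec j i0) as [->|Hne]; updsimp;
  [ | destruct (Hall j Hj) as [E|E]; rewrite E ]; intros; try lra.

Lemma INR2 : INR 2 = 2. Proof. simpl; ring. Qed.

Lemma two_L c m x L R i0 j1 r0 : 0 <= c -> is_profile m x -> (i0 < m)%nat -> (j1 < m)%nat -> (r0 < m)%nat ->
  i0 <> j1 -> x i0 = L -> x j1 = L -> x r0 = R -> L < R ->
  (forall j, (j < m)%nat -> x j = L \/ x j = R) -> cand_ok c m x i0 ->
  (R - L) / 2 <= ((L + R) / 2 - c * (1 - (L + R) / 2)) / INR (nat_pos m x L) /\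
  (0 < L -> L - c * (1 - (L + R) / 2) <= ((L + R) / 2 - c * (1 - (L + R) / 2)) / INR (nat_pos m x L)) /\
  (R < 1 -> 1 - R - c * ((L + R) / 2) <= ((L + R) / 2 - c * (1 - (L + R) / 2)) / INR (nat_pos m x L)).
Proof.
  intros Hc Hp Hi0 Hj1 Hr0 Hij Hxi Hxj Hxr HLR Hall Hok.
  assert (Hri : r0 <> i0) by (intro; subst; lra).
  assert (Hrj : r0 <> j1) by (intro; subst; lra).
  pose proof (Hp i0 Hi0) as HL. pose proof (Hp r0 Hr0) as HR. rewrite Hxi in HL; rewrite Hxr in HR.
  assert (Hv : vscore c m x i0 = ((L + R) / 2 - c * (1 - (L + R) / 2)) / INR (nat_pos m x L)).
  { rewrite (V_min c m x i0 r0 ((L + R) / 2)); auto; rewrite ?Hxi, ?Hxr; try lra.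
    - intros j Hj; destruct (Hall j Hj) as [E|E]; rewrite E; lra.
    - intros j Hj; destruct (Hall j Hj) as [E|E]; rewrite E; lra.
    - right; exists r0; rewrite Hxr; repeat split; auto; lra. }
  rewrite <- Hv. split; [|split].
  - set (t := (L + R) / 2). pose proof (Hok t ltac:(unfold t; lra)) as H.
    rewrite (V_mid c m (upd x i0 t) i0 j1 r0 ((L + t) / 2) ((t + R) / 2)) in H; auto;
      updsimp; rewrite ?Hxj, ?Hxr; unfold t in *; try lra.
    + rewrite np_new in H; auto. simpl in H. lra.
      intros j Hj Hne; destruct (Hall j Hj) as [E|E]; rewrite E; lra.
    + gen i0 Hall.
    + right; exists j1; updsimp; rewrite Hxj; repeat split; auto; lra.
    + gen i0 Hall.
    + right; exists r0; updsimp; rewrite Hxr; repeat split; auto; lra.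
  - intros HL0.
    assert (Hlim : forall t, 0 < t < L -> ((1 + c) / 2) * t + (L / 2 - c * (1 - R / 2)) <= vscore c m x i0).
    { intros t Ht. pose proof (Hok t ltac:(lra)) as H.
      rewrite (V_min c m (upd x i0 t) i0 r0 ((t + L) / 2)) in H; auto;
        updsimp; rewrite ?Hxr; try lra.
      + rewrite np_new in H; auto. simpl in H. rewrite upd_eq, upd_neq, Hxr in H by congruence. lra.
        intros j Hj Hne; destruct (Hall j Hj) as [E|E]; rewrite E; lra.
      + apply profile_upd; auto; lra.
      + gen i0 Hall.
      + gen i0 Hall.
      + right; exists j1; updsimp; rewrite Hxj; repeat split; auto; lra. }
    destruct (affine_lim _ _ _ _ _ HL0 Hlim) as [_ H]. lra.
  - intros HR1.
    assert (Hlim : forall t, R < t < 1 -> (- (1 + c) / 2) * t + (1 - R / 2 - c * L / 2) <= vscore c m x i0).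
    { intros t Ht. pose proof (Hok t ltac:(lra)) as H.
      rewrite (V_max c m (upd x i0 t) i0 j1 ((R + t) / 2)) in H; auto;
        updsimp; rewrite ?Hxj; try lra.
      + rewrite np_new in H; auto. simpl in H. rewrite upd_eq, upd_neq, Hxj in H by congruence. lra.
        intros j Hj Hne; destruct (Hall j Hj) as [E|E]; rewrite E; lra.
      + apply profile_upd; auto; lra.
      + gen i0 Hall.
      + gen i0 Hall.
      + right; exists r0; updsimp; rewrite Hxr; repeat split; auto; lra. }
    destruct (affine_lim _ _ _ _ _ HR1 Hlim) as [H _]. lra.
Qed.

Ltac gen3 i0 Hall := let j := fresh "j" in let Hj := fresh "Hj" in let Hne := fresh "Hne" in let E := fresh "E" in
  intros j Hj; destruct (Nat.eq_dec j i0) as [->|Hne]; updsimp;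
  [ | destruct (Hall j Hj) as [E|[E|E]]; rewrite E ]; intros; try lra.

Lemma three_L c m x L M R i0 j1 m0 r0 : 0 <= c -> is_profile m x -> (i0 < m)%nat -> (j1 < m)%nat ->
  (m0 < m)%nat -> (r0 < m)%nat ->
  i0 <> j1 -> x i0 = L -> x j1 = L -> x m0 = M -> x r0 = R -> L < M -> M < R ->
  (forall j, (j < m)%nat -> x j = L \/ x j = M \/ x j = R) -> cand_ok c m x i0 ->
  (M - L) / 2 <= ((L + M) / 2 - c * (1 - (L + R) / 2)) / INR (nat_pos m x L) /\
  (R - M) / 2 <= ((L + M) / 2 - c * (1 - (L + R) / 2)) / INR (nat_pos m x L) /\
  (0 < L -> L - c * (1 - (L + R) / 2) <= ((L + M) / 2 - c * (1 - (L + R) / 2)) / INR (nat_pos m x L)).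
Proof.
  intros Hc Hp Hi0 Hj1 Hm0 Hr0 Hij Hxi Hxj Hxm Hxr HLM HMR Hall Hok.
  assert (Hri : r0 <> i0) by (intro; subst; lra).
  assert (Hrj : r0 <> j1) by (intro; subst; lra).
  assert (Hmi : m0 <> i0) by (intro; subst; lra).
  assert (Hmj : m0 <> j1) by (intro; subst; lra).
  assert (Hmr : m0 <> r0) by (intro; subst; lra).
  pose proof (Hp i0 Hi0) as HL. pose proof (Hp r0 Hr0) as HR. rewrite Hxi in HL; rewrite Hxr in HR.
  assert (Hv : vscore c m x i0 = ((L + M) / 2 - c * (1 - (L + R) / 2)) / INR (nat_pos m x L)).
  { rewrite (V_min c m x i0 r0 ((L + M) / 2)); auto; rewrite ?Hxi, ?Hxr; try lra.
    - intros j Hj; destruct (Hall j Hj) as [E|[E|E]]; rewrite E; lra.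
    - intros j Hj; destruct (Hall j Hj) as [E|[E|E]]; rewrite E; lra.
    - right; exists m0; rewrite Hxm; repeat split; auto; lra. }
  rewrite <- Hv. split; [|split].
  - set (t := (L + M) / 2). pose proof (Hok t ltac:(unfold t; lra)) as H.
    rewrite (V_mid c m (upd x i0 t) i0 j1 m0 ((L + t) / 2) ((t + M) / 2)) in H; auto;
      updsimp; rewrite ?Hxj, ?Hxm; unfold t in *; try lra.
    + rewrite np_new in H; auto. simpl in H. lra.
      intros j Hj Hne; destruct (Hall j Hj) as [E|[E|E]]; rewrite E; lra.
    + gen3 i0 Hall.
    + right; exists j1; updsimp; rewrite Hxj; repeat split; auto; lra.
    + gen3 i0 Hall.
    + right; exists m0; updsimp; rewrite Hxm; repeat split; auto; lra.
  - set (t := (M + R) / 2). pose proof (Hok t ltac:(unfold t; lra)) as H.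
    rewrite (V_mid c m (upd x i0 t) i0 m0 r0 ((M + t) / 2) ((t + R) / 2)) in H; auto;
      updsimp; rewrite ?Hxm, ?Hxr; unfold t in *; try lra.
    + rewrite np_new in H; auto. simpl in H. lra.
      intros j Hj Hne; destruct (Hall j Hj) as [E|[E|E]]; rewrite E; lra.
    + gen3 i0 Hall.
    + right; exists m0; updsimp; rewrite Hxm; repeat split; auto; lra.
    + gen3 i0 Hall.
    + right; exists r0; updsimp; rewrite Hxr; repeat split; auto; lra.
  - intros HL0.
    assert (Hlim : forall t, 0 < t < L -> ((1 + c) / 2) * t + (L / 2 - c * (1 - R / 2)) <= vscore c m x i0).
    { intros t Ht. pose proof (Hok t ltac:(lra)) as H.
      rewrite (V_min c m (upd x i0 t) i0 r0 ((t + L) / 2)) in H; auto;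
        updsimp; rewrite ?Hxr; try lra.
      + rewrite np_new in H; auto. simpl in H. rewrite upd_eq, upd_neq, Hxr in H by congruence. lra.
        intros j Hj Hne; destruct (Hall j Hj) as [E|[E|E]]; rewrite E; lra.
      + apply profile_upd; auto; lra.
      + gen3 i0 Hall.
      + gen3 i0 Hall.
      + right; exists j1; updsimp; rewrite Hxj; repeat split; auto; lra. }
    destruct (affine_lim _ _ _ _ _ HL0 Hlim) as [_ H]. lra.
Qed.

Lemma ncount_ge2 m p i j : (i < m)%nat -> (j < m)%nat -> i <> j -> p i = true -> p j = true -> (2 <= ncount m p)%nat.
Proof.
  induction m; intros Hi Hj Hij Hpi Hpj; [lia|]. rewrite ncount_S.
  destruct (Nat.eq_dec i m); [subst; rewrite Hpi; pose proof (ncount_pos m p j ltac:(lia) Hpj); lia|].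
  destruct (Nat.eq_dec j m); [subst; rewrite Hpj; pose proof (ncount_pos m p i ltac:(lia) Hpi); lia|].
  specialize (IHm ltac:(lia) ltac:(lia) Hij Hpi Hpj). lia.
Qed.

Lemma min_group2 c m x i0 r0 : 0 <= c -> is_profile m x -> (i0 < m)%nat -> (r0 < m)%nat ->
  (forall j, (j < m)%nat -> x i0 <= x j <= x r0) -> x i0 < x r0 -> cand_ok c m x i0 ->
  (2 <= nat_pos m x (x i0))%nat.
Proof.
  intros Hc Hp Hi0 Hr0 Hall Hlt Hok.
  destruct (Nat.le_gt_cases 2 (nat_pos m x (x i0))) as [|Hn]; auto. exfalso.
  pose proof (ncount_pos m (fun j => Reqb (x j) (x i0)) i0 Hi0 (Reqb_t _ _ eq_refl)) as Hn1.
  fold (nat_pos m x (x i0)) in Hn1.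
  assert (Hone : nat_pos m x (x i0) = 1%nat) by lia.
  assert (Hd : forall j, (j < m)%nat -> j <> i0 -> x i0 < x j).
  { intros j Hj Hne. destruct (Req_dec (x j) (x i0)) as [E|E].
    - pose proof (ncount_ge2 m (fun j => Reqb (x j) (x i0)) i0 j Hi0 Hj (not_eq_sym Hne) (Reqb_t _ _ eq_refl) (Reqb_t _ _ E)).
      fold (nat_pos m x (x i0)) in H. lia.
    - specialize (Hall j Hj). lra. }
  assert (Hri : r0 <> i0) by (intro; subst; lra).
  destruct (ex_min_P m x (fun j => j <> i0)) as [k [Hk [Hki Hmin]]]; [exists r0; auto|].
  pose proof (Hp i0 Hi0) as HL. pose proof (Hp r0 Hr0) as HR. pose proof (Hp k Hk) as Hk2.
  pose proof (Hall k Hk) as Hk3.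
  assert (HL2 : x i0 < x k) by (apply Hd; auto).
  assert (Hv : vscore c m x i0 = ((x i0 + x k) / 2 - 0) / 1 - c * ((1 - (x i0 + x r0) / 2) / 1)).
  { rewrite (V_min c m x i0 r0 ((x i0 + x k) / 2)); auto; rewrite ?Hone; try reflexivity; try lra.
    - intros j Hj Hl. assert (j <> i0) by (intro; subst; lra). specialize (Hmin j Hj H). lra.
    - right; exists k; repeat split; auto. lra. }
  set (t := (x i0 + x k) / 2).
  pose proof (Hok t ltac:(unfold t; split; lra)) as H.
  rewrite (V_min c m (upd x i0 t) i0 r0 ((t + x k) / 2)) in H; auto; updsimp; unfold t in *; try lra.
  - rewrite np_new in H; auto. simpl in H. rewrite upd_eq, upd_neq in H by congruence. nra.
    intros j Hj Hne. specialize (Hmin j Hj Hne). lra.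
  - apply profile_upd; auto. split; lra.
  - intros j Hj. destruct (Nat.eq_dec j i0) as [->|Hne]; updsimp; [lra|].
    specialize (Hmin j Hj Hne). specialize (Hall j Hj). lra.
  - intros j Hj. destruct (Nat.eq_dec j i0) as [->|Hne]; updsimp; [lra|].
    specialize (Hmin j Hj Hne). lra.
  - right; exists k; updsimp; repeat split; auto; lra.
Qed.

Lemma max_group2 c m x i0 r0 : 0 <= c -> is_profile m x -> (i0 < m)%nat -> (r0 < m)%nat ->
  (forall j, (j < m)%nat -> x i0 <= x j <= x r0) -> x i0 < x r0 -> cand_ok c m x r0 ->
  (2 <= nat_pos m x (x r0))%nat.
Proof.
  intros Hc Hp Hi Hr Hall Hlt Hok.
  pose proof (min_group2 c m (refl x) r0 i0 Hc (profile_refl m x Hp) Hr Hi) as H.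
  rewrite nat_pos_refl in H. unfold refl in H. replace (1 - (1 - x r0)) with (x r0) in H by ring.
  apply H; try lra.
  intros j Hj; specialize (Hall j Hj); lra.
  apply cand_ok_refl; auto.
Qed.

Lemma Reqb_eq a b : Reqb a b = true -> a = b.
Proof. unfold Reqb; destruct Req_dec_T; auto; discriminate. Qed.

Lemma ncne_minmax c m x : is_NCNE c m x -> exists i0 r0, (i0 < m)%nat /\ (r0 < m)%nat /\
  (forall j, (j < m)%nat -> x i0 <= x j <= x r0) /\ x i0 < x r0.
Proof.
  intros [[Hp _] [a [b [Ha [Hb Hab]]]]].
  destruct (ex_min_P m x (fun _ => True)) as [i0 [Hi0 [_ Hmin]]]; [exists a; auto|].
  destruct (ex_max_P m x (fun _ => True)) as [r0 [Hr0 [_ Hmax]]]; [exists a; auto|].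
  exists i0, r0. repeat split; auto; try (apply Hmin; auto); try (apply Hmax; auto).
  pose proof (Hmin a Ha I); pose proof (Hmin b Hb I); pose proof (Hmax a Ha I); pose proof (Hmax b Hb I).
  destruct (Rle_dec (x r0) (x i0)); [|lra]. exfalso; apply Hab; lra.
Qed.

Lemma count_LR m x L R : L <> R ->
  (nat_pos m x L + nat_pos m x R)%nat = ncount m (fun j => orb (Reqb (x j) L) (Reqb (x j) R)).
Proof.
  intros H. apply ncount_disj. intros j _ E. apply Reqb_eq in E. apply Reqb_f. lra.
Qed.

Lemma alg4 c L R : 0 <= c < 1 -> 0 <= L -> L < R -> R <= 1 ->
  (R - L) / 2 <= ((L + R) / 2 - c * (1 - (L + R) / 2)) / 2 ->
  (0 < L -> L - c * (1 - (L + R) / 2) <= ((L + R) / 2 - c * (1 - (L + R) / 2)) / 2) ->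
  (1 - L - (1 - R)) / 2 <= ((1 - R + (1 - L)) / 2 - c * (1 - (1 - R + (1 - L)) / 2)) / 2 ->
  (0 < 1 - R -> 1 - R - c * (1 - (1 - R + (1 - L)) / 2) <= ((1 - R + (1 - L)) / 2 - c * (1 - (1 - R + (1 - L)) / 2)) / 2) ->
  L = (1 + c) / 4 /\ R = 1 - (1 + c) / 4.
Proof.
  intros Hc HL HLR HR A1 A2 B1 B2.
  assert (HL0 : 0 < L). { destruct (Rle_dec L 0) as [h|h]; [|lra]. assert (L = 0) by lra. subst L. nra. }
  assert (HR1 : R < 1). { destruct (Rle_dec 1 R) as [h|h]; [|lra]. assert (R = 1) by lra. subst R. nra. }
  specialize (A2 HL0). specialize (B2 ltac:(lra)).
  assert (Hd : R - L = (1 - c) / 2) by nra.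
  assert (Hs : L + R = 1) by nra.
  split; lra.
Qed.

Lemma only4 c x : 0 <= c < 1 -> is_NCNE c 4 x ->
  nat_pos 4 x ((1 + c) / 4) = 2%nat /\ nat_pos 4 x (1 - (1 + c) / 4) = 2%nat.
Proof.
  intros Hc HN. destruct (ncne_minmax c 4 x HN) as [i0 [r0 [Hi0 [Hr0 [Hall Hlt]]]]].
  destruct HN as [HNE _]. pose proof (NE_cand _ _ _ HNE) as Hok. destruct HNE as [Hp _].
  pose proof (min_group2 c 4 x i0 r0 ltac:(lra) Hp Hi0 Hr0 Hall Hlt (Hok i0 Hi0)) as H1.
  pose proof (max_group2 c 4 x i0 r0 ltac:(lra) Hp Hi0 Hr0 Hall Hlt (Hok r0 Hr0)) as H2.
  pose proof (count_LR 4 x (x i0) (x r0) ltac:(lra)) as H3.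
  pose proof (ncount_le 4 (fun j => orb (Reqb (x j) (x i0)) (Reqb (x j) (x r0)))) as H4.
  assert (E1 : nat_pos 4 x (x i0) = 2%nat) by lia.
  assert (E2 : nat_pos 4 x (x r0) = 2%nat) by lia.
  assert (HLR : forall j, (j < 4)%nat -> x j = x i0 \/ x j = x r0).
  { intros j Hj. pose proof (ncount_full 4 (fun j => orb (Reqb (x j) (x i0)) (Reqb (x j) (x r0))) ltac:(lia) j Hj) as E. simpl in E.
    apply Bool.orb_true_iff in E. destruct E as [E|E]; apply Reqb_eq in E; auto. }
  destruct (ncount_two 4 (fun j => Reqb (x j) (x i0)) i0 ltac:(change (2 <= nat_pos 4 x (x i0))%nat; lia) Hi0 (Reqb_t _ _ eq_refl))
    as [j1 [Hj1 [Hj1i E3]]]. apply Reqb_eq in E3.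
  destruct (ncount_two 4 (fun j => Reqb (x j) (x r0)) r0 ltac:(change (2 <= nat_pos 4 x (x r0))%nat; lia) Hr0 (Reqb_t _ _ eq_refl))
    as [r1 [Hr1 [Hr1r E4]]]. apply Reqb_eq in E4.
  pose proof (two_L c 4 x (x i0) (x r0) i0 j1 r0 ltac:(lra) Hp Hi0 Hj1 Hr0 (not_eq_sym Hj1i) eq_refl E3 eq_refl Hlt HLR (Hok i0 Hi0)) as [A1 [A2 A3]].
  pose proof (two_L c 4 (refl x) (1 - x r0) (1 - x i0) r0 r1 i0 ltac:(lra) (profile_refl _ _ Hp) Hr0 Hr1 Hi0
    (not_eq_sym Hr1r)) as B.
  unfold refl at 1 2 3 in B. rewrite E4 in B.
  specialize (B eq_refl eq_refl eq_refl ltac:(lra)).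
  assert (HLR' : forall j, (j < 4)%nat -> refl x j = 1 - x r0 \/ refl x j = 1 - x i0).
  { intros j Hj; unfold refl; destruct (HLR j Hj) as [E|E]; rewrite E; auto. }
  specialize (B HLR' (cand_ok_refl _ _ _ _ Hp Hr0 (Hok r0 Hr0))).
  rewrite nat_pos_refl in B. replace (1 - (1 - x r0)) with (x r0) in B by ring.
  destruct B as [B1 [B2 B3]].
  rewrite E1 in A1, A2, A3. rewrite E2 in B1, B2, B3. rewrite INR2 in *.
  pose proof (Hp i0 Hi0). pose proof (Hp r0 Hr0).
  set (L := x i0) in *. set (R := x r0) in *.
  destruct (alg4 c L R Hc ltac:(lra) Hlt ltac:(lra) A1 A2 B1 B2) as [EL ER].
  rewrite <- ER, <- EL. auto.
Qed.

Lemma alg23 c L R nL nR : 0 <= c < 1 -> 0 <= L -> L < R -> R <= 1 ->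
  ((nL = 2 /\ nR = 3) \/ (nL = 3 /\ nR = 2)) ->
  (R - L) / 2 <= ((L + R) / 2 - c * (1 - (L + R) / 2)) / nL ->
  (0 < L -> L - c * (1 - (L + R) / 2) <= ((L + R) / 2 - c * (1 - (L + R) / 2)) / nL) ->
  (R < 1 -> 1 - R - c * ((L + R) / 2) <= ((L + R) / 2 - c * (1 - (L + R) / 2)) / nL) ->
  (1 - L - (1 - R)) / 2 <= ((1 - R + (1 - L)) / 2 - c * (1 - (1 - R + (1 - L)) / 2)) / nR ->
  (0 < 1 - R -> 1 - R - c * (1 - (1 - R + (1 - L)) / 2) <= ((1 - R + (1 - L)) / 2 - c * (1 - (1 - R + (1 - L)) / 2)) / nR) ->
  (1 - L < 1 -> 1 - (1 - L) - c * ((1 - R + (1 - L)) / 2) <= ((1 - R + (1 - L)) / 2 - c * (1 - (1 - R + (1 - L)) / 2)) / nR) ->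
  False.
Proof.
  intros Hc HL HLR HR Hn A1 A2 A3 B1 B2 B3.
  destruct Hn as [[-> ->]|[-> ->]].
  - assert (HL0 : 0 < L). { destruct (Rle_dec L 0) as [h|h]; [|lra]. assert (L = 0) by lra. subst L. nra. }
    specialize (A2 HL0). specialize (B3 ltac:(lra)).
    destruct (Rle_dec 1 R) as [h|h].
    + assert (R = 1) by lra. subst R. nra.
    + specialize (A3 ltac:(lra)). specialize (B2 ltac:(lra)). nra.
  - assert (HR1 : R < 1). { destruct (Rle_dec 1 R) as [h|h]; [|lra]. assert (R = 1) by lra. subst R. nra. }
    specialize (B2 ltac:(lra)). specialize (A3 HR1).
    destruct (Rle_dec L 0) as [h|h].
    + assert (L = 0) by lra. subst L. nra.
    + specialize (A2 ltac:(lra)). specialize (B3 ltac:(lra)). nra.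
Qed.

Lemma alg221 c L M R : 0 <= c < 1 -> 0 <= L -> L < M -> M < R -> R <= 1 ->
  (M - L) / 2 <= ((L + M) / 2 - c * (1 - (L + R) / 2)) / 2 ->
  (R - M) / 2 <= ((L + M) / 2 - c * (1 - (L + R) / 2)) / 2 ->
  (0 < L -> L - c * (1 - (L + R) / 2) <= ((L + M) / 2 - c * (1 - (L + R) / 2)) / 2) ->
  ((1 - M) - (1 - R)) / 2 <= ((1 - R + (1 - M)) / 2 - c * (1 - (1 - R + (1 - L)) / 2)) / 2 ->
  ((1 - L) - (1 - M)) / 2 <= ((1 - R + (1 - M)) / 2 - c * (1 - (1 - R + (1 - L)) / 2)) / 2 ->
  (0 < 1 - R -> 1 - R - c * (1 - (1 - R + (1 - L)) / 2) <= ((1 - R + (1 - M)) / 2 - c * (1 - (1 - R + (1 - L)) / 2)) / 2) ->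
  L = (1 + 2 * c) / 6 /\ M = 1 / 2 /\ R = 1 - (1 + 2 * c) / 6.
Proof.
  intros Hc HL HLM HMR HR A1 A2 A3 B1 B2 B3.
  assert (HL0 : 0 < L). { destruct (Rle_dec L 0) as [h|h]; [|lra]. assert (L = 0) by lra. subst L. nra. }
  assert (HR1 : R < 1). { destruct (Rle_dec 1 R) as [h|h]; [|lra]. assert (R = 1) by lra. subst R. nra. }
  specialize (A3 HL0). specialize (B3 ltac:(lra)).
  assert (Hd : R - L = 2 * (1 - c) / 3) by nra.
  assert (HM : 2 * M = L + R) by nra.
  assert (Hs : L + R = 1) by nra.
  lra.
Qed.

Lemma ncount_ex m p : (0 < ncount m p)%nat -> exists j, (j < m)%nat /\ p j = true.
Proof.
  intros H. destruct (Classical_Prop.classic (exists j, (j < m)%nat /\ p j = true)) as [E|E]; auto.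
  exfalso. rewrite ncount_zero in H; [lia|]. intros j Hj. destruct (p j) eqn:Ep; auto. exfalso; eauto.
Qed.

Lemma INR3 : INR 3 = 3. Proof. simpl; ring. Qed.

Lemma only5 c x : 0 <= c < 1 -> is_NCNE c 5 x ->
  nat_pos 5 x ((1 + 2 * c) / 6) = 2%nat /\ nat_pos 5 x (1 / 2) = 1%nat /\
  nat_pos 5 x (1 - (1 + 2 * c) / 6) = 2%nat.
Proof.
  intros Hc HN. destruct (ncne_minmax c 5 x HN) as [i0 [r0 [Hi0 [Hr0 [Hall Hlt]]]]].
  destruct HN as [HNE _]. pose proof (NE_cand _ _ _ HNE) as Hok. destruct HNE as [Hp _].
  pose proof (min_group2 c 5 x i0 r0 ltac:(lra) Hp Hi0 Hr0 Hall Hlt (Hok i0 Hi0)) as H1.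
  pose proof (max_group2 c 5 x i0 r0 ltac:(lra) Hp Hi0 Hr0 Hall Hlt (Hok r0 Hr0)) as H2.
  pose proof (count_LR 5 x (x i0) (x r0) ltac:(lra)) as H3.
  pose proof (ncount_compl 5 (fun j => orb (Reqb (x j) (x i0)) (Reqb (x j) (x r0)))) as H4.
  destruct (ncount_two 5 (fun j => Reqb (x j) (x i0)) i0 ltac:(change (2 <= nat_pos 5 x (x i0))%nat; lia) Hi0 (Reqb_t _ _ eq_refl))
    as [j1 [Hj1 [Hj1i E3]]]. apply Reqb_eq in E3.
  destruct (ncount_two 5 (fun j => Reqb (x j) (x r0)) r0 ltac:(change (2 <= nat_pos 5 x (x r0))%nat; lia) Hr0 (Reqb_t _ _ eq_refl))
    as [r1 [Hr1 [Hr1r E4]]]. apply Reqb_eq in E4.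
  pose proof (Hp i0 Hi0). pose proof (Hp r0 Hr0).
  set (q := fun j => orb (Reqb (x j) (x i0)) (Reqb (x j) (x r0))) in *.
  destruct (Nat.eq_dec (ncount 5 q) 5) as [E5|E5].
  -
    exfalso.
    assert (HLR : forall j, (j < 5)%nat -> x j = x i0 \/ x j = x r0).
    { intros j Hj. pose proof (ncount_full 5 q E5 j Hj) as E. unfold q in E.
      apply Bool.orb_true_iff in E. destruct E as [E|E]; apply Reqb_eq in E; auto. }
    pose proof (two_L c 5 x (x i0) (x r0) i0 j1 r0 ltac:(lra) Hp Hi0 Hj1 Hr0 (not_eq_sym Hj1i) eq_refl E3 eq_refl Hlt HLR (Hok i0 Hi0)) as [A1 [A2 A3]].
    pose proof (two_L c 5 (refl x) (1 - x r0) (1 - x i0) r0 r1 i0 ltac:(lra) (profile_refl _ _ Hp) Hr0 Hr1 Hi0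
      (not_eq_sym Hr1r)) as B.
    unfold refl at 1 2 3 in B. rewrite E4 in B.
    specialize (B eq_refl eq_refl eq_refl ltac:(lra)).
    assert (HLR' : forall j, (j < 5)%nat -> refl x j = 1 - x r0 \/ refl x j = 1 - x i0).
    { intros j Hj; unfold refl; destruct (HLR j Hj) as [E|E]; rewrite E; auto. }
    specialize (B HLR' (cand_ok_refl _ _ _ _ Hp Hr0 (Hok r0 Hr0))).
    rewrite nat_pos_refl in B. replace (1 - (1 - x r0)) with (x r0) in B by ring.
    destruct B as [B1 [B2 B3]].
    apply (alg23 c (x i0) (x r0) (INR (nat_pos 5 x (x i0))) (INR (nat_pos 5 x (x r0)))); auto; try lra.
    assert (nat_pos 5 x (x i0) = 2%nat /\ nat_pos 5 x (x r0) = 3%nat \/ nat_pos 5 x (x i0) = 3%nat /\ nat_pos 5 x (x r0) = 2%nat) as [[-> ->]|[-> ->]] by lia.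
    + left; rewrite INR2, INR3; auto.
    + right; rewrite INR2, INR3; auto.
  - assert (E1 : nat_pos 5 x (x i0) = 2%nat) by (pose proof (ncount_le 5 (fun j => negb (q j))); lia).
    assert (E2 : nat_pos 5 x (x r0) = 2%nat) by (pose proof (ncount_le 5 (fun j => negb (q j))); lia).
    assert (Ho : ncount 5 (fun j => negb (q j)) = 1%nat) by lia.
    destruct (ncount_ex 5 (fun j => negb (q j)) ltac:(lia)) as [m0 [Hm0 Em0]].
    assert (Hother : forall j, (j < 5)%nat -> negb (q j) = true -> j = m0).
    { intros j Hj Ej. destruct (Nat.eq_dec j m0) as [|Hne]; auto.
      pose proof (ncount_ge2 5 (fun j => negb (q j)) j m0 Hj Hm0 Hne Ej Em0). lia. }
    assert (Hq : forall j, (j < 5)%nat -> q j = false -> x j <> x i0 /\ x j <> x r0).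
    { intros j Hj Ej. unfold q in Ej. apply Bool.orb_false_iff in Ej. destruct Ej as [Ea Eb].
      split; intro E; [rewrite Reqb_t in Ea|rewrite Reqb_t in Eb]; auto; discriminate. }
    assert (Hm0q : q m0 = false) by (destruct (q m0); auto).
    destruct (Hq m0 Hm0 Hm0q) as [Hm1 Hm2].
    pose proof (Hall m0 Hm0) as Hm3.
    assert (HLM : x i0 < x m0) by lra. assert (HMR : x m0 < x r0) by lra.
    assert (HLMR : forall j, (j < 5)%nat -> x j = x i0 \/ x j = x m0 \/ x j = x r0).
    { intros j Hj. destruct (q j) eqn:Eq.
      - unfold q in Eq. apply Bool.orb_true_iff in Eq. destruct Eq as [E|E]; apply Reqb_eq in E; auto.
      - rewrite (Hother j Hj) by (rewrite Eq; auto). auto. }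
    assert (EM : nat_pos 5 x (x m0) = 1%nat).
    { apply ncount_one with m0; auto. apply Reqb_t; auto.
      intros j Hj Hne. apply Reqb_f. intro E. apply Hne. apply Hother; auto.
      destruct (q j) eqn:Eq; auto. unfold q in Eq. apply Bool.orb_true_iff in Eq.
      destruct Eq as [Ee|Ee]; apply Reqb_eq in Ee; lra. }
    pose proof (three_L c 5 x (x i0) (x m0) (x r0) i0 j1 m0 r0 ltac:(lra) Hp Hi0 Hj1 Hm0 Hr0 (not_eq_sym Hj1i)
      eq_refl E3 eq_refl eq_refl HLM HMR HLMR (Hok i0 Hi0)) as [A1 [A2 A3]].
    pose proof (three_L c 5 (refl x) (1 - x r0) (1 - x m0) (1 - x i0) r0 r1 m0 i0 ltac:(lra) (profile_refl _ _ Hp) Hr0 Hr1 Hm0 Hi0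
      (not_eq_sym Hr1r)) as B.
    unfold refl at 1 2 3 4 in B. rewrite E4 in B.
    specialize (B eq_refl eq_refl eq_refl eq_refl ltac:(lra) ltac:(lra)).
    assert (HLR' : forall j, (j < 5)%nat -> refl x j = 1 - x r0 \/ refl x j = 1 - x m0 \/ refl x j = 1 - x i0).
    { intros j Hj; unfold refl; destruct (HLMR j Hj) as [E|[E|E]]; rewrite E; auto. }
    specialize (B HLR' (cand_ok_refl _ _ _ _ Hp Hr0 (Hok r0 Hr0))).
    rewrite nat_pos_refl in B. replace (1 - (1 - x r0)) with (x r0) in B by ring.
    destruct B as [B1 [B2 B3]].
    rewrite E1, INR2 in A1, A2, A3. rewrite E2, INR2 in B1, B2, B3.
    destruct (alg221 c (x i0) (x m0) (x r0) Hc ltac:(lra) HLM HMR ltac:(lra) A1 A2 A3 B1 B2 B3) as [EL [EM' ER]].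
    rewrite <- ER, <- EL, <- EM'. auto.
Qed.

Lemma np_new' m x i t : (i < m)%nat -> (forall j, (j < m)%nat -> j <> i -> x j <> t) ->
  nat_pos m (upd x i t) t = 1%nat.
Proof. intros. rewrite <- (upd_eq x i t) at 2. apply np_new; auto. Qed.
Lemma np_join' m x i t : (i < m)%nat -> x i <> t ->
  nat_pos m (upd x i t) t = S (nat_pos m x t).
Proof. intros. rewrite <- (upd_eq x i t) at 2. apply np_join; auto. Qed.

Lemma if4_L c m x i p1 : 0 <= c < 1 -> p1 = (1 + c) / 4 ->
  (forall j, (j < m)%nat -> x j = p1 \/ x j = 1 - p1) ->
  nat_pos m x p1 = 2%nat -> nat_pos m x (1 - p1) = 2%nat -> (i < m)%nat -> x i = p1 -> cand_ok c m x i.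
Proof.
  intros Hc Hp1 Hall N1 N2 Hi Hxi.
  assert (Hp : is_profile m x) by (intros j Hj; destruct (Hall j Hj) as [E|E]; rewrite E; lra).
  destruct (ncount_two m (fun j => Reqb (x j) p1) i ltac:(change (2 <= nat_pos m x p1)%nat; lia) Hi (Reqb_t _ _ Hxi))
    as [j1 [Hj1 [Hj1i E3]]]. apply Reqb_eq in E3.
  destruct (ncount_ex m (fun j => Reqb (x j) (1 - p1)) ltac:(change (0 < nat_pos m x (1 - p1))%nat; lia)) as [r0 [Hr0 E4]].
  apply Reqb_eq in E4.
  assert (Hri : r0 <> i) by (intro; subst; lra).
  assert (Hrj : r0 <> j1) by (intro; subst; lra).
  assert (Hv : vscore c m x i = (1 - c) / 4).
  { rewrite (V_min c m x i r0 ((p1 + (1 - p1)) / 2)); auto; rewrite ?Hxi, ?E4; try lra.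
    - rewrite N1, INR2. nra.
    - intros j Hj; destruct (Hall j Hj) as [E|E]; rewrite E; lra.
    - intros j Hj; destruct (Hall j Hj) as [E|E]; rewrite E; lra.
    - right; exists r0; rewrite E4; repeat split; auto; lra. }
  intros t Ht. rewrite Hv.
  destruct (Rtotal_order t p1) as [T1|[T1|T1]].
  - rewrite (V_min c m (upd x i t) i r0 ((t + p1) / 2)); auto; updsimp; rewrite ?E4; try lra.
    + rewrite np_new'; auto. simpl. nra.
      intros j Hj Hne; destruct (Hall j Hj) as [E|E]; rewrite E; lra.
    + apply profile_upd; auto.
    + gen i Hall.
    + gen i Hall.
    + right; exists j1; updsimp; rewrite E3; repeat split; auto; lra.
  - rewrite T1, <- Hxi, upd_same, Hv. lra.
  - destruct (Rtotal_order t (1 - p1)) as [T2|[T2|T2]].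
    + rewrite (V_mid c m (upd x i t) i j1 r0 ((p1 + t) / 2) ((t + (1 - p1)) / 2)); auto; updsimp; rewrite ?E3, ?E4; try lra.
      * rewrite np_new'; auto. simpl. nra.
        intros j Hj Hne; destruct (Hall j Hj) as [E|E]; rewrite E; lra.
      * gen i Hall.
      * right; exists j1; updsimp; rewrite E3; repeat split; auto; lra.
      * gen i Hall.
      * right; exists r0; updsimp; rewrite E4; repeat split; auto; lra.
    + subst t. rewrite (V_max c m (upd x i (1 - p1)) i j1 ((p1 + (1 - p1)) / 2)); auto; updsimp; rewrite ?E3; try lra.
      * rewrite np_join', N2; auto; [|lra]. rewrite INR3. nra.
      * apply profile_upd; auto.
      * gen i Hall.
      * gen i Hall.
      * right; exists j1; updsimp; rewrite E3; repeat split; auto; lra.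
    + rewrite (V_max c m (upd x i t) i j1 (((1 - p1) + t) / 2)); auto; updsimp; rewrite ?E3; try lra.
      * rewrite np_new'; auto. simpl. nra.
        intros j Hj Hne; destruct (Hall j Hj) as [E|E]; rewrite E; lra.
      * apply profile_upd; auto.
      * gen i Hall.
      * gen i Hall.
      * right; exists r0; updsimp; rewrite E4; repeat split; auto; lra.
Qed.

Lemma if4 c x : 0 <= c < 1 ->
  nat_pos 4 x ((1 + c) / 4) = 2%nat -> nat_pos 4 x (1 - (1 + c) / 4) = 2%nat -> is_NCNE c 4 x.
Proof.
  intros Hc N1 N2. set (p1 := (1 + c) / 4) in *.
  pose proof (count_LR 4 x p1 (1 - p1) ltac:(unfold p1; lra)) as H3.
  assert (Hall : forall j, (j < 4)%nat -> x j = p1 \/ x j = 1 - p1).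
  { intros j Hj. pose proof (ncount_full 4 (fun j => orb (Reqb (x j) p1) (Reqb (x j) (1 - p1))) ltac:(lia) j Hj) as E.
    apply Bool.orb_true_iff in E. destruct E as [E|E]; apply Reqb_eq in E; auto. }
  assert (Hp : is_profile 4 x) by (intros j Hj; destruct (Hall j Hj) as [E|E]; rewrite E; unfold p1; lra).
  destruct (ncount_ex 4 (fun j => Reqb (x j) p1) ltac:(change (0 < nat_pos 4 x p1)%nat; lia)) as [i0 [Hi0 E3]].
  destruct (ncount_ex 4 (fun j => Reqb (x j) (1 - p1)) ltac:(change (0 < nat_pos 4 x (1 - p1))%nat; lia)) as [r0 [Hr0 E4]].
  apply Reqb_eq in E3; apply Reqb_eq in E4.
  split; [|exists i0, r0; repeat split; auto; unfold p1 in *; lra].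
  split; auto. intros i t Hi Ht.
  destruct (Hall i Hi) as [E|E].
  - apply (if4_L c 4 x i p1); auto.
  - assert (Hok : cand_ok c 4 (refl x) i).
    { apply (if4_L c 4 (refl x) i p1); auto.
      - intros j Hj; unfold refl; destruct (Hall j Hj) as [E'|E']; rewrite E'; [right|left]; ring.
      - rewrite nat_pos_refl; auto.
      - rewrite nat_pos_refl. replace (1 - (1 - p1)) with p1 by ring. auto.
      - unfold refl; rewrite E; ring. }
    pose proof (cand_ok_refl c 4 (refl x) i (profile_refl _ _ Hp) Hi Hok) as H.
    rewrite refl_refl in H. apply H; auto.
Qed.

Lemma if5_L c m x i p1 : 0 <= c < 1 -> p1 = (1 + 2 * c) / 6 ->
  (forall j, (j < m)%nat -> x j = p1 \/ x j = 1 / 2 \/ x j = 1 - p1) ->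
  nat_pos m x p1 = 2%nat -> nat_pos m x (1 / 2) = 1%nat -> nat_pos m x (1 - p1) = 2%nat ->
  (i < m)%nat -> x i = p1 -> cand_ok c m x i.
Proof.
  intros Hc Hp1 Hall N1 NM N2 Hi Hxi.
  assert (Hp : is_profile m x) by (intros j Hj; destruct (Hall j Hj) as [E|[E|E]]; rewrite E; lra).
  destruct (ncount_two m (fun j => Reqb (x j) p1) i ltac:(change (2 <= nat_pos m x p1)%nat; lia) Hi (Reqb_t _ _ Hxi))
    as [j1 [Hj1 [Hj1i E3]]]. apply Reqb_eq in E3.
  destruct (ncount_ex m (fun j => Reqb (x j) (1 - p1)) ltac:(change (0 < nat_pos m x (1 - p1))%nat; lia)) as [r0 [Hr0 E4]].
  destruct (ncount_ex m (fun j => Reqb (x j) (1 / 2)) ltac:(change (0 < nat_pos m x (1 / 2))%nat; lia)) as [m0 [Hm0 E5]].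
  apply Reqb_eq in E4; apply Reqb_eq in E5.
  assert (Hri : r0 <> i) by (intro; subst; lra).
  assert (Hrj : r0 <> j1) by (intro; subst; lra).
  assert (Hmi : m0 <> i) by (intro; subst; lra).
  assert (Hmj : m0 <> j1) by (intro; subst; lra).
  assert (Hmr : m0 <> r0) by (intro; subst; lra).
  assert (Hv : vscore c m x i = (1 - c) / 6).
  { rewrite (V_min c m x i r0 ((p1 + 1 / 2) / 2)); auto; rewrite ?Hxi, ?E4; try lra.
    - rewrite N1, INR2. nra.
    - intros j Hj; destruct (Hall j Hj) as [E|[E|E]]; rewrite E; lra.
    - intros j Hj; destruct (Hall j Hj) as [E|[E|E]]; rewrite E; lra.
    - right; exists m0; rewrite E5; repeat split; auto; lra. }
  intros t Ht. rewrite Hv.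
  assert (Hnew : forall t, t <> p1 -> t <> 1 / 2 -> t <> 1 - p1 -> nat_pos m (upd x i t) t = 1%nat).
  { intros t' h1 h2 h3. apply np_new'; auto. intros j Hj Hne; destruct (Hall j Hj) as [E|[E|E]]; rewrite E; auto. }
  destruct (Rtotal_order t p1) as [T1|[T1|T1]].
  - rewrite (V_min c m (upd x i t) i r0 ((t + p1) / 2)); auto; updsimp; rewrite ?E4; try lra.
    + rewrite Hnew by lra. simpl. nra.
    + apply profile_upd; auto.
    + gen3 i Hall.
    + gen3 i Hall.
    + right; exists j1; updsimp; rewrite E3; repeat split; auto; lra.
  - rewrite T1, <- Hxi, upd_same, Hv. lra.
  - destruct (Rtotal_order t (1 / 2)) as [T2|[T2|T2]].
    + rewrite (V_mid c m (upd x i t) i j1 m0 ((p1 + t) / 2) ((t + 1 / 2) / 2)); auto; updsimp; rewrite ?E3, ?E5; try lra.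
      * rewrite Hnew by lra. simpl. nra.
      * gen3 i Hall.
      * right; exists j1; updsimp; rewrite E3; repeat split; auto; lra.
      * gen3 i Hall.
      * right; exists m0; updsimp; rewrite E5; repeat split; auto; lra.
    + subst t. rewrite (V_mid c m (upd x i (1 / 2)) i j1 r0 ((p1 + 1 / 2) / 2) ((1 / 2 + (1 - p1)) / 2)); auto; updsimp; rewrite ?E3, ?E4; try lra.
      * rewrite np_join', NM; auto; [|lra]. rewrite INR2. nra.
      * gen3 i Hall.
      * right; exists j1; updsimp; rewrite E3; repeat split; auto; lra.
      * gen3 i Hall.
      * right; exists r0; updsimp; rewrite E4; repeat split; auto; lra.
    + destruct (Rtotal_order t (1 - p1)) as [T3|[T3|T3]].
      * rewrite (V_mid c m (upd x i t) i m0 r0 ((1 / 2 + t) / 2) ((t + (1 - p1)) / 2)); auto; updsimp; rewrite ?E5, ?E4; try lra.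
        -- rewrite Hnew by lra. simpl. nra.
        -- gen3 i Hall.
        -- right; exists m0; updsimp; rewrite E5; repeat split; auto; lra.
        -- gen3 i Hall.
        -- right; exists r0; updsimp; rewrite E4; repeat split; auto; lra.
      * subst t. rewrite (V_max c m (upd x i (1 - p1)) i j1 ((1 / 2 + (1 - p1)) / 2)); auto; updsimp; rewrite ?E3; try lra.
        -- rewrite np_join', N2; auto; [|lra]. rewrite INR3. nra.
        -- apply profile_upd; auto.
        -- gen3 i Hall.
        -- gen3 i Hall.
        -- right; exists m0; updsimp; rewrite E5; repeat split; auto; lra.
      * rewrite (V_max c m (upd x i t) i j1 (((1 - p1) + t) / 2)); auto; updsimp; rewrite ?E3; try lra.
        -- rewrite Hnew by lra. simpl. nra.
        -- apply profile_upd; auto.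
        -- gen3 i Hall.
        -- gen3 i Hall.
        -- right; exists r0; updsimp; rewrite E4; repeat split; auto; lra.
Qed.

Ltac gen' i0 Hall := let j := fresh "j" in let Hj := fresh "Hj" in let Hne := fresh "Hne" in let E := fresh "E" in
  intros j Hj; destruct (Nat.eq_dec j i0) as [->|Hne]; updsimp;
  [ | destruct (Hall j Hj Hne) as [E|E]; rewrite E ]; intros; try lra.

Lemma if5_M c m x i p1 : 0 <= c < 1 -> p1 = (1 + 2 * c) / 6 ->
  (forall j, (j < m)%nat -> x j = p1 \/ x j = 1 / 2 \/ x j = 1 - p1) ->
  nat_pos m x p1 = 2%nat -> nat_pos m x (1 / 2) = 1%nat -> nat_pos m x (1 - p1) = 2%nat ->
  (i < m)%nat -> x i = 1 / 2 -> forall t, 0 <= t <= 1 / 2 -> vscore c m (upd x i t) i <= vscore c m x i.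
Proof.
  intros Hc Hp1 Hall N1 NM N2 Hi Hxi.
  assert (Hp : is_profile m x) by (intros j Hj; destruct (Hall j Hj) as [E|[E|E]]; rewrite E; lra).
  assert (Hall' : forall j, (j < m)%nat -> j <> i -> x j = p1 \/ x j = 1 - p1).
  { intros j Hj Hne. destruct (Hall j Hj) as [E|[E|E]]; auto. exfalso.
    pose proof (ncount_ge2 m (fun j => Reqb (x j) (1 / 2)) i j Hi Hj (not_eq_sym Hne) (Reqb_t _ _ Hxi) (Reqb_t _ _ E)).
    change (2 <= nat_pos m x (1 / 2))%nat in H. lia. }
  destruct (ncount_ex m (fun j => Reqb (x j) p1) ltac:(change (0 < nat_pos m x p1)%nat; lia)) as [i1 [Hi1 E3]].
  destruct (ncount_ex m (fun j => Reqb (x j) (1 - p1)) ltac:(change (0 < nat_pos m x (1 - p1))%nat; lia)) as [r0 [Hr0 E4]].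
  apply Reqb_eq in E3; apply Reqb_eq in E4.
  assert (Hri : r0 <> i) by (intro; subst; lra).
  assert (Hr1 : r0 <> i1) by (intro; subst; lra).
  assert (Hii : i1 <> i) by (intro; subst; lra).
  assert (Hv : vscore c m x i = (1 - c) / 3).
  { rewrite (V_mid c m x i i1 r0 ((p1 + 1 / 2) / 2) ((1 / 2 + (1 - p1)) / 2)); auto; rewrite ?Hxi, ?E3, ?E4; try lra.
    - rewrite NM. simpl. nra.
    - intros j Hj; destruct (Nat.eq_dec j i) as [->|Hne]; [rewrite Hxi|destruct (Hall' j Hj Hne) as [E|E]; rewrite E]; lra.
    - right; exists i1; rewrite E3; repeat split; auto; lra.
    - intros j Hj; destruct (Nat.eq_dec j i) as [->|Hne]; [rewrite Hxi|destruct (Hall' j Hj Hne) as [E|E]; rewrite E]; lra.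
    - right; exists r0; rewrite E4; repeat split; auto; lra. }
  intros t Ht. rewrite Hv.
  destruct (Rtotal_order t p1) as [T1|[T1|T1]].
  - rewrite (V_min c m (upd x i t) i r0 ((t + p1) / 2)); auto; updsimp; rewrite ?E4; try lra.
    + rewrite np_new'; auto. simpl. nra.
      intros j Hj Hne; destruct (Hall' j Hj Hne) as [E|E]; rewrite E; lra.
    + apply profile_upd; auto; lra.
    + gen' i Hall'.
    + gen' i Hall'.
    + right; exists i1; updsimp; rewrite E3; repeat split; auto; lra.
  - subst t. rewrite (V_min c m (upd x i p1) i r0 ((p1 + (1 - p1)) / 2)); auto; updsimp; rewrite ?E4; try lra.
    + rewrite np_join', N1; auto; [|lra]. rewrite INR3. nra.
    + apply profile_upd; auto; lra.
    + gen' i Hall'.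
    + gen' i Hall'.
    + right; exists r0; updsimp; rewrite E4; repeat split; auto; lra.
  - rewrite (V_mid c m (upd x i t) i i1 r0 ((p1 + t) / 2) ((t + (1 - p1)) / 2)); auto; updsimp; rewrite ?E3, ?E4; try lra.
    + rewrite np_new'; auto. simpl. nra.
      intros j Hj Hne; destruct (Hall' j Hj Hne) as [E|E]; rewrite E; lra.
    + gen' i Hall'.
    + right; exists i1; updsimp; rewrite E3; repeat split; auto; lra.
    + gen' i Hall'.
    + right; exists r0; updsimp; rewrite E4; repeat split; auto; lra.
Qed.

Lemma if5 c x : 0 <= c < 1 ->
  nat_pos 5 x ((1 + 2 * c) / 6) = 2%nat -> nat_pos 5 x (1 / 2) = 1%nat ->
  nat_pos 5 x (1 - (1 + 2 * c) / 6) = 2%nat -> is_NCNE c 5 x.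
Proof.
  intros Hc N1 NM N2. set (p1 := (1 + 2 * c) / 6) in *.
  pose proof (count_LR 5 x p1 (1 - p1) ltac:(unfold p1; lra)) as H3.
  pose proof (ncount_disj 5 (fun j => orb (Reqb (x j) p1) (Reqb (x j) (1 - p1))) (fun j => Reqb (x j) (1 / 2))) as H5.
  assert (Hall : forall j, (j < 5)%nat -> x j = p1 \/ x j = 1 / 2 \/ x j = 1 - p1).
  { intros j Hj. rewrite <- H3 in H5.
    pose proof (ncount_full 5 _ ltac:(rewrite <- H5; [change (nat_pos 5 x p1 + nat_pos 5 x (1 - p1) + nat_pos 5 x (1 / 2) = 5)%nat; lia|];
      intros k _ Ek; apply Bool.orb_true_iff in Ek; apply Reqb_f; destruct Ek as [Ek|Ek]; apply Reqb_eq in Ek; rewrite Ek; unfold p1; lra) j Hj) as E.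
    apply Bool.orb_true_iff in E. destruct E as [E|E]; [apply Bool.orb_true_iff in E; destruct E as [E|E]|]; apply Reqb_eq in E; auto. }
  assert (Hp : is_profile 5 x) by (intros j Hj; destruct (Hall j Hj) as [E|[E|E]]; rewrite E; unfold p1; lra).
  destruct (ncount_ex 5 (fun j => Reqb (x j) p1) ltac:(change (0 < nat_pos 5 x p1)%nat; lia)) as [i0 [Hi0 E3]].
  destruct (ncount_ex 5 (fun j => Reqb (x j) (1 - p1)) ltac:(change (0 < nat_pos 5 x (1 - p1))%nat; lia)) as [r0 [Hr0 E4]].
  apply Reqb_eq in E3; apply Reqb_eq in E4.
  assert (HallR : forall j, (j < 5)%nat -> refl x j = p1 \/ refl x j = 1 / 2 \/ refl x j = 1 - p1).
  { intros j Hj; unfold refl; destruct (Hall j Hj) as [E'|[E'|E']]; rewrite E'; [right; right|right; left|left]; field. }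
  assert (RN1 : nat_pos 5 (refl x) p1 = 2%nat) by (rewrite nat_pos_refl; auto).
  assert (RNM : nat_pos 5 (refl x) (1 / 2) = 1%nat) by (rewrite nat_pos_refl; replace (1 - 1 / 2) with (1 / 2) by field; auto).
  assert (RN2 : nat_pos 5 (refl x) (1 - p1) = 2%nat) by (rewrite nat_pos_refl; replace (1 - (1 - p1)) with p1 by ring; auto).
  split; [|exists i0, r0; repeat split; auto; unfold p1 in *; lra].
  split; auto. intros i t Hi Ht.
  destruct (Hall i Hi) as [E|[E|E]].
  - apply (if5_L c 5 x i p1); auto.
  - destruct (Rle_dec t (1 / 2)) as [T|T].
    + apply (if5_M c 5 x i p1); auto; lra.
    + pose proof (if5_M c 5 (refl x) i p1 Hc eq_refl HallR RN1 RNM RN2 Hi ltac:(unfold refl; rewrite E; field) (1 - t) ltac:(lra)) as H.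
      rewrite upd_refl, !vscore_refl in H; auto.
      replace (1 - (1 - t)) with t in H by ring. auto.
      apply profile_upd; auto; lra.
  - assert (Hok : cand_ok c 5 (refl x) i).
    { apply (if5_L c 5 (refl x) i p1); auto. unfold refl; rewrite E; ring. }
    pose proof (cand_ok_refl c 5 (refl x) i (profile_refl _ _ Hp) Hi Hok) as H.
    rewrite refl_refl in H. apply H; auto.
Qed.

Theorem corollary3 (c : R) (hc : 0 <= c < 1) :
  (forall x : nat -> R,
     is_NCNE c 4 x <->
     (nat_pos 4 x ((1 + c) / 4) = 2%nat /\ nat_pos 4 x (1 - (1 + c) / 4) = 2%nat)) /\
  (forall x : nat -> R,
     is_NCNE c 5 x <->
     (nat_pos 5 x ((1 + 2 * c) / 6) = 2%nat /\ nat_pos 5 x (1 / 2) = 1%nat /\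
      nat_pos 5 x (1 - (1 + 2 * c) / 6) = 2%nat)).
Proof.
  split; intros x; split.
  - apply only4; auto.
  - intros [A B]; apply if4; auto.
  - apply only5; auto.
  - intros [A [B C]]; apply if5; auto.
Qed.
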